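(* For every integer $k\ge0$, let $b_i$ denote the coefficient of $z^i$ in the power series expansion of $\left(\frac{\ln(1+z)}{z}\right)^{4k+1}$. Then $\nu(b_{4k})=-4k$.
   Context: $\nu(r)$ denotes the 2-adic valuation of a nonzero rational number $r$ (e.g. $\nu(4)=2$, $\nu(3)=0$, $\nu(1/8)=-3$). $\frac{\ln(1+z)}{z}=1-\frac z2+\frac{z^2}{3}-\frac{z^3}{4}+\cdots$. *)

(* Defs.v *)
From HB Require Import structures.
From mathcomp Require Import all_boot all_order all_algebra.
Set Implicit Arguments. Unset Strict Implicit. Unset Printing Implicit Defensive.
Import Order.TTheory GRing.Theory Num.Theory.
Local Open Scope ring_scope.

(* 2-adic valuation of a rational number r (meaningful for r <> 0):
   nu(r) = v_2(numerator) - v_2(denominator). *)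
Definition nu2 (r : rat) : int :=
  (logn 2 `|numq r|%N)%:Z - (logn 2 `|denq r|%N)%:Z.

(* Truncation at degree N of the power series ln(1+z)/z = sum_{j>=0} (-1)^j z^j/(j+1). *)
Definition lnser (N : nat) : {poly rat} :=
  \poly_(j < N.+1) ((-1) ^+ j / (j.+1)%:R).

(* Coefficient of z^i in (ln(1+z)/z)^n; truncating at degree i does not
   affect the coefficient of z^i. *)
Definition lncoef (n i : nat) : rat := ((lnser i) ^+ n)`_i.

(* Main.v *)
Require Import Defs.
From HB Require Import structures.
From mathcomp Require Import all_boot all_order all_algebra.
Import Order.TTheory GRing.Theory Num.Theory.
Local Open Scope ring_scope.
From mathcomp Require Import ring lra.
Lemma derivQ_coef N i : (('X * lnser N)^`())`_i = if (i <= N)%N then (-1) ^+ i else 0.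
Proof.
rewrite coef_deriv coefXM /= /lnser coef_poly ltnS.
case: ifP => _; last by rewrite mul0rn.
rewrite -(mulr_natr ((-1) ^+ i / i.+1%:R)) divfK // pnatr_eq0 //.
Qed.

Lemma lnser_key N : (1 + 'X) * ('X * lnser N)^`() = 1 + ((-1) ^+ N) *: 'X^(N.+1) :> {poly rat}.
Proof.
apply/polyP => i.
rewrite mulrDl mul1r !coefD coefXM coef1 coefZ coefXn.
case: i => [|i]; first by rewrite derivQ_coef /= expr0 mulr0 addr0.
rewrite /= !derivQ_coef eqSS add0r.
case: (ltngtP i N) => H.
- by rewrite exprS mulN1r addNr mulr0.
- by rewrite addr0 mulr0.
- by subst i; rewrite add0r mulr1.
Qed.

Definition aa N n m : rat := ((lnser N) ^+ n)`_m.

Lemma coefX_deriv (p : {poly rat}) m : ('X * p^`())`_m = p`_m *+ m.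
Proof. by rewrite coefXM; case: m => [|m] //=; rewrite coef_deriv. Qed.

Lemma poly_rec N n :
  'X * ((1 + 'X) * ((lnser N) ^+ n.+1)^`()) =
  ((lnser N) ^+ n + ((-1) ^+ N) *: 'X^(N.+1) * (lnser N) ^+ n
   - (lnser N) ^+ n.+1 - 'X * (lnser N) ^+ n.+1) *+ n.+1.
Proof.
set Q := lnser N.
have E1 : ('X * Q)^`() = Q + 'X * Q^`() by rewrite derivM derivX mul1r.
have K := lnser_key N. rewrite -/Q E1 in K.
set c := (-1) ^+ N *: 'X^(N.+1) in K *.
rewrite deriv_exp /= !(exprS Q).
have -> : c * Q ^+ n = (1 + c) * Q ^+ n - Q ^+ n by ring.
rewrite -K.
ring.
Qed.

Lemma aa_rec N n m : (m.+1 <= N)%N ->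
  aa N n.+1 m.+1 * (m.+1 + n.+1)%:R =
  n.+1%:R * aa N n m.+1 - (m + n.+1)%:R * aa N n.+1 m.
Proof.
move=> Hm.
have := congr1 (fun p : {poly rat} => p`_m.+1) (poly_rec N n).
rewrite /= mulrDl mul1r mulrDr coefD coefXM /= coef_deriv.
rewrite coefXM /= coefX_deriv.
rewrite coefMn !coefB coefD -scalerAl coefZ coefXnM ltnS Hm coefXM /=.
rewrite mulr0 addr0 -/(aa N n.+1 m.+1) -/(aa N n m.+1) -/(aa N n.+1 m).
move: (aa N n.+1 m.+1) (aa N n m.+1) (aa N n.+1 m) => a1 b a0 H.
rewrite -(mulr_natr a1) -(mulr_natr a0) -(mulr_natr (b - a1 - a0)) in H.
rewrite !natrD !mulrSr in H *.
move: (m%:R) (n%:R) H => x y H.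
have E : a1 * (x + 1 + (y + 1)) - ((y + 1) * b - (x + (y + 1)) * a0)
  = (a1 * (x + 1) + a0 * x) - (b - a1 - a0) * (y + 1) by ring.
rewrite H subrr in E; apply/eqP; rewrite -subr_eq0 E //.
Qed.

Fixpoint stir (M N : nat) : nat :=
  match M, N with
  | 0, 0 => 1
  | 0, _.+1 => 0
  | _.+1, 0 => 0
  | M'.+1, N'.+1 => stir M' N' + M' * stir M' N
  end.

Lemma stirS M N : stir M.+1 N.+1 = (stir M N + M * stir M N.+1)%N.
Proof. by []. Qed.
Lemma stirS0 M : stir M.+1 0 = 0%N.
Proof. by []. Qed.

Lemma stir_lt M N : (M < N)%N -> stir M N = 0%N.
Proof.
elim: M N => [|M IH] [|N] //= H.
by rewrite IH // IH ?muln0 // ltnW.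
Qed.

Lemma stir_nn n : stir n n = 1%N.
Proof. by elim: n => // n IH; rewrite stirS IH stir_lt // muln0. Qed.

Lemma aa_n0 N n : aa N n 0 = 1.
Proof.
rewrite /aa; elim: n => [|n IH]; first by rewrite expr0 coef1.
by rewrite exprS coef0M IH mulr1 /lnser coef_poly /= expr0 divr1.
Qed.

Lemma aa_0S N m : aa N 0 m.+1 = 0.
Proof. by rewrite /aa expr0 coef1. Qed.

Lemma aa_closed N m : (m <= N)%N -> forall n,
  aa N n m * ((m + n)`!)%:R = (-1) ^+ m * (n`!)%:R * (stir (m + n) n)%:R.
Proof.
elim: m => [|m IHm] Hm n.
  by rewrite aa_n0 add0n stir_nn expr0 !mul1r mulr1.
elim: n => [|n IHn].
  by rewrite aa_0S mul0r addn0 stirS0 mulr0.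
have R := aa_rec N n m Hm.
have -> : (m.+1 + n.+1)`! = ((m.+1 + n.+1) * (m + n.+1)`!)%N by rewrite addSn factS.
rewrite natrM mulrA R mulrBl -!mulrA.
rewrite addSnnS in IHn. rewrite IHn (IHm (ltnW Hm)).
rewrite addSn stirS factS !natrD !natrM.
move: (aa N n.+1 m.+1) => _.
rewrite exprS !natrD -!natr1.
move: (n`!%:R) (m%:R) (n%:R) ((stir (m + n.+1) n)%:R) ((stir (m + n.+1) n.+1)%:R) ((-1) ^+ m) => a b c d e f.
ring.
Qed.
Section Par.
Local Open Scope nat_scope.
Definition fpar (j N : nat) : nat := if j <= N then 'C(j, N - j) else 0.


Lemma stir_odd_step j N : odd (stir (j.*2).+1 N.+1) = odd (stir j.*2 N).
Proof. by rewrite stirS oddD oddM odd_double andFb addbF. Qed.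

Lemma stir_par1 j N : odd (stir j.*2 N) = odd (fpar j N).
Proof.
elim: j N => [|j IH] N.
  by case: N => [|N] //; rewrite /fpar /= bin0n.
case: N => [|N]; first by rewrite doubleS stirS0 /fpar /=.
rewrite doubleS stirS oddD oddM oddS odd_double andTb stir_odd_step IH.
case: N => [|N].
  rewrite stirS0 /=; case: j {IH} => [|j] //; rewrite /fpar /= ?bin0 //.
rewrite stir_odd_step IH /fpar.
case: (ltngtP j N.+1) => Hj.
- rewrite (Hj : j <= N) ltnS (ltnW Hj) subSS (subSn (Hj : j <= N)) binS addnC oddD //.
- rewrite leqNgt (ltnW Hj) /= ltnS leqNgt Hj //.
- by subst j; rewrite ltnn ltnSn !subnn !bin0.
Qed.

End Par.

Lemma fact_double M : exists2 o, odd o & ((M.*2)`! = 2 ^ M * M`! * o)%N.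
Proof.
elim: M => [|M [o Ho E]]; first by exists 1%N.
exists (M.*2.+1 * o)%N; first by rewrite oddM /= odd_double Ho.
rewrite doubleS !factS E expnS -!muln2; ring.
Qed.

Lemma nu_lemma (a : rat) (X Y e : nat) : odd X -> odd Y ->
  a * ((Y * 2 ^ e)%N)%:R = X%:R -> nu2 a = - (e%:Z).
Proof.
move=> oX oY H.
have a0 : a != 0.
  apply/eqP=> a0; move: H; rewrite a0 mul0r => /esym/eqP; rewrite pnatr_eq0.
  by move/eqP=> X0; move: oX; rewrite X0.
have q0 : (denq a)%:~R != 0 :> rat by rewrite intr_eq0 denq_neq0.
have H1 : ((numq a) * ((Y * 2 ^ e)%N)%:Z)%:~R = ((X%:Z) * denq a)%:~R :> rat.
  rewrite !intrM.
  rewrite -[((Posz X)%:~R : rat)]/(X%:R : rat) -[((Posz (Y*2^e)%N)%:~R : rat)]/(((Y*2^e)%N)%:R : rat) -H.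
  have Ea := divq_num_den a.
  move: q0 Ea; set p := numq a; set q := denq a => q0 Ea.
  by rewrite -Ea mulrAC divfK.
have H2 := intr_inj H1.
have H3 : (`|numq a| * (Y * 2 ^ e) = X * `|denq a|)%N.
  by have := congr1 absz H2; rewrite !abszM !absz_nat.
have pp : (0 < `|numq a|)%N by rewrite absz_gt0 numq_eq0.
have qp : (0 < `|denq a|)%N by rewrite absz_gt0 denq_neq0.
have op : odd `|numq a|.
  have : (`|numq a| %| X)%N.
    rewrite -(Gauss_dvdr _ (coprime_num_den a)) mulnC -H3 dvdn_mulr //.
  move=> D; case/boolP: (odd `|numq a|) => // ev.
  by rewrite -dvdn2 in ev; have := dvdn_trans ev D; rewrite dvdn2 oX.
have := congr1 (logn 2) H3.
rewrite !lognM // ?muln_gt0 ?expn_gt0 //= ?odd_gt0 //.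
have l0 : forall n, odd n -> logn 2 n = 0%N by move=> n on; rewrite logn_coprime // coprime2n.
rewrite pfactorK // (l0 _ op) (l0 _ oY) (l0 _ oX) !add0n => ->.
by rewrite /nu2 (l0 _ op) sub0r.
Qed.

Lemma stir_odd2 k : odd (stir (4 * k).*2.+1 (4 * k).+1).
Proof. by rewrite stir_odd_step stir_par1 /fpar leqnn subnn bin0. Qed.

Theorem lemmaA (k : nat) :
  lncoef (4 * k + 1) (4 * k) != 0 /\
  nu2 (lncoef (4 * k + 1) (4 * k)) = - (4 * k)%:Z.
Proof.
have E : lncoef (4 * k + 1) (4 * k) = aa (4 * k) (4 * k + 1) (4 * k) by [].
have Hc := aa_closed (4 * k) (4 * k) (leqnn (4 * k)) (4 * k + 1).
rewrite E; move: Hc; move: (aa _ _ _) => a.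
rewrite addnA addnn !addn1 factS.
have [o oo Eo] := fact_double (4 * k).
rewrite Eo factS.
have s1 : (-1) ^+ (4 * k) = 1 :> rat by rewrite -signr_odd oddM /= expr0.
rewrite s1 mul1r => Hc.
have H : a * (((4 * k).*2.+1 * o) * 2 ^ (4 * k))%N%:R = ((4 * k).+1 * stir (4 * k).*2.+1 (4 * k).+1)%N%:R.
  apply: (mulIf (x := ((4 * k)`!)%:R)); first by rewrite pnatr_eq0 -lt0n fact_gt0.
  rewrite !natrM in Hc *.
  move: Hc; move: (((4 * k).*2.+1)%:R) (o%:R) ((2 ^ (4 * k))%:R) ((4 * k)`!%:R) ((4 * k).+1%:R) ((stir (4 * k).*2.+1 (4 * k).+1)%:R) => y1 y2 t f k1 s Hc.
  rewrite (_ : a * (y1 * y2 * t) * f = a * (y1 * (t * f * y2))); first by rewrite Hc; ring.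
  ring.
have oX : odd ((4 * k).+1 * stir (4 * k).*2.+1 (4 * k).+1).
  by rewrite oddM stir_odd2 andbT /= oddM.
have oY : odd ((4 * k).*2.+1 * o) by rewrite oddM /= odd_double oo.
split; last exact: nu_lemma oX oY H.
apply/eqP=> a0; move: H; rewrite a0 mul0r => /esym/eqP; rewrite pnatr_eq0 => /eqP X0.
by move: oX; rewrite X0.
Qed.
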